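(* Fix a risk level $\beta>0$ and a transient MDP with a sink state as described in the context (in particular $\mu>0$ componentwise). Suppose that $\bm{w}^{\infty,\star}>-\bm{\infty}$, i.e. every component of $\bm{w}^{\infty,\star}$ is finite. Then there exists a stationary deterministic policy $\pi^\star=(\bm d^\star)_\infty\in\Pi_{\mathrm{SD}}$ such that \[ \bm{w}^{\infty,\star}=\bm{w}^{\infty}(\pi^\star)=L^{\bm d^\star}\bm{w}^{\infty,\star}, \] and $\bm{w}^{\infty,\star}$ is the unique vector satisfying this equation.
   Context: MDP: states $\bar{\mathcal S}=\{1,\dots,S,S+1\}$, with $e:=S+1$ a sink state and $\mathcal S=\{1,\dots,S\}$ the non-sink states; finite actions $\mathcal A=\{1,\dots,A\}$; transition probabilities $\bar p(s,a,s')$; real rewards $\bar r(s,a,s')$ of arbitrary sign (written $p,r$ below); $\bar p(e,a,e)=1$, $\bar r(e,a,e)=0$ for all $a$; initial distribution $\bar\mu$ with $\bar\mu_e=0$ and its restriction $\mu$ to $\mathcal S$ satisfies $\mu>0$. Policies: $\Pi_{\mathrm{HR}}$ history-dependent randomized; $\Pi_{\mathrm{MR}}$ / $\Pi_{\mathrm{MD}}$ Markov randomized / deterministic (sequences of decision rules $\bm d_k:\mathcal S\to\Delta(\mathcal A)$); $\Pi_{\mathrm{SR}}$ / $\Pi_{\mathrm{SD}}$ stationary randomized / deterministic, $\pi=(\bm d)_\infty=(\bm d,\bm d,\dots)$; $\mathcal D=(\Delta(\mathcal A))^{\mathcal S}$ the set of decision rules, $d_a(s)$ the probability of $a$ in $s$.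 Transience (standing assumption): for every $\pi\in\Pi_{\mathrm{SD}}$, $\sum_{t=0}^\infty \mathbb P^{\pi,s}[\tilde s_t=s']<\infty$ for all $s,s'\in\mathcal S$. Entropic risk measure: $\mathrm{ERM}_\beta[\tilde x]=-\beta^{-1}\log\mathbb E[e^{-\beta\tilde x}]$. For $t\in\mathbb N$, $\pi\in\Pi_{\mathrm{MD}}$, $s\in\mathcal S$: $v^t_s(\pi)=\mathrm{ERM}^{\pi,s}_\beta[\sum_{k=0}^{t-1}r(\tilde s_k,\tilde a_k,\tilde s_{k+1})]$ (process started at $s$ following $\pi$), $v^{t,\star}_s=\max_{\pi\in\Pi_{\mathrm{MD}}}v^t_s(\pi)$; exponential value functions $w^t_s(\pi)=-\exp(-\beta v^t_s(\pi))$, $w^{t,\star}_s=-\exp(-\beta v^{t,\star}_s)$; $\bm w^\infty(\pi)=\liminf_{t\to\infty}\bm w^t(\pi)$, $\bm w^{\infty,\star}=\liminf_{t\to\infty}\bm w^{t,\star}$ (componentwise). For $\bm d\in\mathcal D$ define $\bm B^{\bm d}\in\mathbb R_+^{S\times S}$, $\bm b^{\bm d}\in\mathbb R_+^S$ by $B^{\bm d}_{s,s'}=\sum_a p(s,a,s')d_a(s)e^{-\beta r(s,a,s')}$, $b^{\bm d}_s=\sum_a p(s,a,e)d_a(s)e^{-\beta r(s,a,e)}$ for $s,s'\in\mathcal S$. Exponential Bellman operators on $\mathbb R^S$: $L^{\bm d}\bm w=\bm B^{\bm d}\bm w-\bm b^{\bm d}$ and $L^\star\bm w=\max_{\bm d\in\mathcal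 D}L^{\bm d}\bm w$ (componentwise max). *)

(* Defs.v *)
From HB Require Import structures.
From mathcomp Require Import all_boot all_order all_algebra.
From mathcomp Require Import all_classical all_reals all_analysis.
Set Implicit Arguments. Unset Strict Implicit. Unset Printing Implicit Defensive.
Import Order.TTheory GRing.Theory Num.Theory.
Local Open Scope ring_scope.

(* States: [option S]; [None] is the sink state e, [Some s] the non-sink
   states.  The transition probabilities [p] and
   rewards [r] are given on non-sink origins; the sink is absorbing with
   reward 0 (hard-coded below, as in the context: p(e,a,e)=1, r(e,a,e)=0). *)
Section MDP.
Variables (R : realType) (S A : finType).
Variables (p r : S -> A -> option S -> R) (beta : R).

Definition pbar (d : S -> A) (s s' : option S) : R :=
  match s with
  | Some s0 => p s0 (d s0) s'
  | None => if s' is None then 1 else 0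
  end.

Definition rbar (d : S -> A) (s s' : option S) : R :=
  match s with
  | Some s0 => r s0 (d s0) s'
  | None => 0
  end.

Definition MDpolicy := nat -> S -> A.
Definition stationary (d : S -> A) : MDpolicy := fun _ => d.

(* Trajectory s_0 = s, s_1, ..., s_t, where x = (s_1,...,s_t). *)
Definition traj (s : S) {t : nat} (x : t.-tuple (option S)) (k : nat) : option S :=
  nth None (Some s :: (x : seq (option S))) k.

Definition path_prob (pi : MDpolicy) (s : S) (t : nat) (x : t.-tuple (option S)) : R :=
  \prod_(k < t) pbar (pi k) (traj s x k) (traj s x k.+1).

Definition path_ret (pi : MDpolicy) (s : S) (t : nat) (x : t.-tuple (option S)) : R :=
  \sum_(k < t) rbar (pi k) (traj s x k) (traj s x k.+1).

Definition expect (pi : MDpolicy) (s : S) (t : nat) (g : t.-tuple (option S) -> R) : R :=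
  \sum_(x : t.-tuple (option S)) path_prob pi s x * g x.

Definition ERM (pi : MDpolicy) (s : S) (t : nat) (X : t.-tuple (option S) -> R) : R :=
  - beta^-1 * ln (expect pi s (fun x => expR (- beta * X x))).

Definition vt (t : nat) (pi : MDpolicy) (s : S) : R := @ERM pi s t (@path_ret pi s t).
Definition vt_opt (t : nat) (s : S) : R := sup (range (fun pi : MDpolicy => vt t pi s)).

Definition wt (t : nat) (pi : MDpolicy) (s : S) : R := - expR (- beta * vt t pi s).
Definition wt_opt (t : nat) (s : S) : R := - expR (- beta * vt_opt t s).

Definition winf (pi : MDpolicy) (s : S) : \bar R := limn_einf (fun t => (wt t pi s)%:E).
Definition winf_opt (s : S) : \bar R := limn_einf (fun t => (wt_opt t s)%:E).

Definition occ (pi : MDpolicy) (s : S) (t : nat) (s' : S) : R :=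
  expect pi s (fun x : t.-tuple (option S) => (traj s x t == Some s')%:R).

Definition transient : Prop :=
  forall (d : S -> A) (s s' : S),
    (\sum_(0 <= t <oo) (occ (stationary d) s t s')%:E < +oo)%E.

(* Randomized decision rules d : S -> A -> R (d s a = d_a(s)). *)
Definition Bmat (d : S -> A -> R) (s s' : S) : R :=
  \sum_(a : A) p s a (Some s') * d s a * expR (- beta * r s a (Some s')).
Definition bvec (d : S -> A -> R) (s : S) : R :=
  \sum_(a : A) p s a None * d s a * expR (- beta * r s a None).
Definition Lop (d : S -> A -> R) (w : S -> R) (s : S) : R :=
  \sum_(s' : S) Bmat d s s' * w s' - bvec d s.

End MDP.

Definition det_rule (R : realType) (S A : finType) (d : S -> A) : S -> A -> R :=
  fun s a => (a == d s)%:R.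

(* Main.v *)
Require Import Defs.
From HB Require Import structures.
From mathcomp Require Import all_boot all_order all_algebra.
From mathcomp Require Import all_classical all_reals all_analysis.
Import Order.TTheory GRing.Theory Num.Theory.
Local Open Scope ring_scope.

Section Aux.
Variable R : realType.


Lemma big_optionE (T : finType) (F : option T -> R) :
  \sum_(y : option T) F y = F None + \sum_(t : T) F (Some t).
Proof.
rewrite -(big_map Some xpredT F).
have -> : F None + \sum_(i <- [seq Some j | j <- index_enum T]) F i =
  \sum_(i <- None :: [seq Some j | j <- index_enum T]) F i by rewrite big_cons.
apply: perm_big; apply: uniq_perm.
- exact: index_enum_uniq.
- rewrite /= map_inj_uniq ?index_enum_uniq ?andbT; last by move=> ? ? [].
  by apply/mapP => -[].

- by case=> [t|] /=; rewrite !mem_index_enum // inE /=; apply/esym/mapP; exists t; rewrite ?mem_index_enum.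
Qed.

Lemma sum_tupleS (T : finType) n (F : n.+1.-tuple T -> R) :
  \sum_(x : n.+1.-tuple T) F x = \sum_(y : T) \sum_(x : n.-tuple T) F [tuple of y :: x].
Proof.
rewrite pair_big /=.
rewrite (reindex (fun yx : T * n.-tuple T => [tuple of yx.1 :: yx.2])) //=.
exists (fun x : n.+1.-tuple T => (thead x, [tuple of behead x])).
  by case=> y x _ /=; congr pair; apply: val_inj.
by move=> x _; rewrite [in RHS](tuple_eta x); apply: val_inj.
Qed.

Fixpoint G (T : finType) (t : nat) (M : nat -> T -> T -> R) (f : T -> R) (z : T) : R :=
  match t with
  | 0 => f z
  | t'.+1 => \sum_(y : T) M 0%N z y * G T t' (fun k => M k.+1) f y
  end.
Arguments G {T} t M f z.

Lemma G_sum (T : finType) (d0 : T) t : forall (M : nat -> T -> T -> R) f z,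
  \sum_(x : t.-tuple T)
     ((\prod_(k < t) M k (nth d0 (z :: (x : seq T)) k) (nth d0 (z :: (x : seq T)) k.+1))
       * f (nth d0 (z :: (x : seq T)) t)) = G t M f z.
Proof.
elim: t => [|t IH] M f z /=.
  rewrite (big_pred1 [tuple]) /=; first by rewrite big_ord0 mul1r.
  by move=> x; apply/eqP; rewrite [x]tuple0.
rewrite sum_tupleS; apply: eq_bigr => y _.
rewrite -(IH (fun k => M k.+1)) mulr_sumr; apply: eq_bigr => x _ /=.
by rewrite big_ord_recl /= mulrA.
Qed.

End Aux.

Arguments G {R T} t M f z.

Section Main.
Variables (R : realType) (S A : finType) (p r : S -> A -> option S -> R) (beta : R).
Hypothesis hbeta : 0 < beta.
Hypothesis hp0 : forall s a s', 0 <= p s a s'.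
Hypothesis hp1 : forall s a, \sum_(s' : option S) p s a s' = 1.

Definition Bw s a y := p s a y * expR (- beta * r s a y).
Definition bo (d : S -> A) (s : S) := Bw s (d s) None.
Definition Bo (d : S -> A) (u : S -> R) (s : S) := \sum_(s' : S) Bw s (d s) (Some s') * u s'.
Definition Td d u s := bo d s + Bo d u s.

Definition Mx (pi : MDpolicy S A) k z y :=
  pbar p (pi k) z y * expR (- beta * rbar r (pi k) z y).
Definition U t pi s := G t (Mx pi) (fun _ => 1) (Some s).

Lemma expect_U t pi s :
  expect p pi s (fun x : t.-tuple _ => expR (- beta * path_ret r pi s x)) = U t pi s.
Proof.
rewrite /expect /U -(@G_sum R _ None); apply: eq_bigr => x _.
by rewrite /path_prob /path_ret mulr_sumr expR_sum mulr1 -big_split.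
Qed.

Lemma G_None t : forall pi, G t (Mx pi) (fun _ => 1) None = 1.
Proof.
elim: t => [//|t IH] pi /=; rewrite big_optionE IH big1 ?addr0.
  by rewrite /Mx /= mulr0 expR0 !mulr1.
by move=> s _; rewrite /Mx /= !mul0r.
Qed.

Lemma U_rec t pi s : U t.+1 pi s = Td (pi 0%N) (U t (fun k => pi k.+1)) s.
Proof. by rewrite /U /= big_optionE G_None mulr1. Qed.

Lemma Bw_ge0 s a y : 0 <= Bw s a y.
Proof. by rewrite /Bw mulr_ge0 // ltW // expR_gt0. Qed.

Lemma pos_comb (T : finType) (q c : T -> R) : (forall y, 0 <= q y) ->
  \sum_y q y = 1 -> (forall y, 0 < c y) -> 0 < \sum_y q y * c y.
Proof.
move=> q0 q1 c0; rewrite lt_def sumr_ge0 ?andbT; last by move=> y _; rewrite mulr_ge0 // ltW.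
apply/negP => /eqP H.
have : \sum_y q y = 0.
  apply: big1 => y _; have := psumr_eq0P (fun y _ => mulr_ge0 (q0 y) (ltW (c0 y))) H (isT : xpredT y).
  by move/eqP; rewrite mulf_eq0 (gt_eqF (c0 y)) orbF => /eqP.
by rewrite q1 => /eqP; rewrite oner_eq0.
Qed.

Lemma Td_pos d u s : (forall s, 0 < u s) -> 0 < Td d u s.
Proof.
move=> u0.
have -> : Td d u s = \sum_y p s (d s) y *
   (expR (- beta * r s (d s) y) * (if y is Some s' then u s' else 1)).
  by rewrite big_optionE /Td /bo /Bo /Bw mulr1; congr (_ + _); apply: eq_bigr => ? _; rewrite mulrA.
apply: pos_comb => // -[s'|]; rewrite ?mulr1 ?expR_gt0 //.
by rewrite mulr_gt0 ?expR_gt0.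
Qed.

Lemma U_pos t : forall pi s, 0 < U t pi s.
Proof.
elim: t => [|t IH] pi s; first by rewrite /U /= ltr01.
by rewrite U_rec; apply: Td_pos => s'; apply: IH.
Qed.

Lemma algE (x : R) : - expR (- beta * (- beta^-1 * ln x)) = - expR (ln x).
Proof. by rewrite mulrA mulrNN mulfV ?mul1r // gt_eqF. Qed.

Lemma vt_U t pi s : vt p r beta t pi s = - beta^-1 * ln (U t pi s).
Proof. by rewrite /vt /ERM expect_U. Qed.

Lemma wt_U t pi s : wt p r beta t pi s = - U t pi s.
Proof. by rewrite /wt vt_U algE lnK // posrE U_pos. Qed.

Variable a0 : A.

Definition Qv (u : S -> R) s a := Bw s a None + \sum_(s' : S) Bw s a (Some s') * u s'.
Definition gr u s := [arg min_(a < a0) Qv u s a]%O.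
Definition Topt u := Td (gr u) u.

Lemma Topt_le d u s : Topt u s <= Td d u s.
Proof.
rewrite /Topt /Td /bo /Bo /gr; case: arg_minP => // a _ H.
exact: (H (d s)).
Qed.

Lemma Bo_mono d u v : (forall s, u s <= v s) -> forall s, Bo d u s <= Bo d v s.
Proof. by move=> uv s; apply: ler_sum => s' _; apply: ler_wpM2l; rewrite ?Bw_ge0. Qed.

Lemma Td_mono d u v : (forall s, u s <= v s) -> forall s, Td d u s <= Td d v s.
Proof. by move=> uv s; rewrite lerD2l Bo_mono. Qed.

Lemma Topt_mono u v : (forall s, u s <= v s) -> forall s, Topt u s <= Topt v s.
Proof. by move=> uv s; apply: le_trans (Topt_le (gr v) u s) _; apply: Td_mono. Qed.

Definition V t := iter t Topt (fun _ => 1).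

Lemma V_le_U t : forall pi s, V t s <= U t pi s.
Proof.
elim: t => [//|t IH] pi s; rewrite U_rec /=.
by apply: le_trans (Topt_le (pi 0%N) _ s) _; apply: Td_mono => s'; apply: IH.
Qed.

Definition piopt t : MDpolicy S A := fun k => gr (V (t - k.+1)).

Lemma U_opt t : forall s, U t (piopt t) s = V t s.
Proof.
elim: t => [//|t IH] s; rewrite U_rec.
have -> : (fun k => piopt t.+1 k.+1) = piopt t by [].
have -> : piopt t.+1 0%N = gr (V t) by rewrite /piopt subSS subn0.
have -> : U t (piopt t) = V t by apply: funext.
by [].
Qed.

Lemma V_pos t s : 0 < V t s.
Proof. by rewrite -U_opt U_pos. Qed.

Lemma vt_opt_eq t s : vt_opt p r beta t s = - beta^-1 * ln (V t s).
Proof.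
have ub : ubound (range (fun pi => vt p r beta t pi s)) (- beta^-1 * ln (V t s)).
  move=> _ [pi _ <-]; rewrite vt_U; apply: ler_wnM2l.
    by rewrite oppr_le0 ltW // invr_gt0.
  by rewrite ler_ln ?posrE ?V_pos ?U_pos // V_le_U.
have mem : range (fun pi => vt p r beta t pi s) (- beta^-1 * ln (V t s)).
  by exists (piopt t) => //; rewrite vt_U U_opt.
rewrite /vt_opt; apply/eqP; rewrite eq_le; apply/andP; split.
  by apply: ge_sup => //; exists (- beta^-1 * ln (V t s)).
apply: sup_upper_bound => //; split; first by exists (- beta^-1 * ln (V t s)).
by exists (- beta^-1 * ln (V t s)).
Qed.

Lemma wt_opt_eq t s : wt_opt p r beta t s = - V t s.
Proof. by rewrite /wt_opt vt_opt_eq algE lnK // posrE V_pos. Qed.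


Definition Bpow d k v := iter k (Bo d) v.

Lemma bo_ge0 d s : 0 <= bo d s.
Proof. exact: Bw_ge0. Qed.

Lemma Bo_ge0 d v : (forall s, 0 <= v s) -> forall s, 0 <= Bo d v s.
Proof. by move=> v0 s; apply: sumr_ge0 => s' _; rewrite mulr_ge0 ?Bw_ge0. Qed.

Lemma Bpow_ge0 d k v : (forall s, 0 <= v s) -> forall s, 0 <= Bpow d k v s.
Proof. by move=> v0; elim: k => [//|k IH] s /=; apply: Bo_ge0. Qed.

Lemma pbar_ge0 d z y : 0 <= pbar p d z y.
Proof. by case: z => [z|] //=; case: y. Qed.

Lemma G_ge0 (M : nat -> option S -> option S -> R) f t z :
  (forall k z y, 0 <= M k z y) -> (forall y, 0 <= f y) -> 0 <= G t M f z.
Proof.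
elim: t M z => [|t IH] M z M0 f0 //=.
by apply: sumr_ge0 => y _; rewrite mulr_ge0 // IH.
Qed.

Lemma G_mono (M : nat -> option S -> option S -> R) f g t z :
  (forall k z y, 0 <= M k z y) -> (forall y, f y <= g y) -> G t M f z <= G t M g z.
Proof.
elim: t M z => [|t IH] M z M0 fg //=.
by apply: ler_sum => y _; rewrite ler_wpM2l // IH.
Qed.

Lemma G_lin (M : nat -> option S -> option S -> R) (g : S -> option S -> R) t z :
  G t M (fun y => \sum_j g j y) z = \sum_j G t M (g j) z.
Proof.
elim: t M z => [|t IH] M z //=.
rewrite exchange_big /=; apply: eq_bigr => y _.
by rewrite IH mulr_sumr.
Qed.

Lemma occ_G d s t s' :
  occ p (stationary d) s t s' =
  G t (fun _ => pbar p d) (fun y => (y == Some s')%:R) (Some s).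
Proof. by rewrite /occ /expect -(@G_sum R _ None). Qed.

Lemma occ_ge0 d s t s' : 0 <= occ p (stationary d) s t s'.
Proof. by rewrite occ_G G_ge0 // => *; rewrite ?pbar_ge0. Qed.

Section Reach.
Variable d : S -> A.
Definition Zs i := `[< forall k, Bpow d k (bo d) i = 0 >].
Definition fZ (y : option S) : R := if y is Some j then (Zs j)%:R else 0.

Lemma Z_closed i : Zs i -> p i (d i) None = 0 /\ forall j, p i (d i) (Some j) != 0 -> Zs j.
Proof.
move/asboolP => H; split.
  have := H 0%N; rewrite /= /bo /Bw => /eqP; rewrite mulf_eq0 => /orP[/eqP //|].
  by rewrite gt_eqF ?expR_gt0.
move=> j pj; apply/asboolP => k.
have := H k.+1; rewrite /= /Bo => Hs.
have := psumr_eq0P (fun j' _ => mulr_ge0 (Bw_ge0 i (d i) (Some j')) (@Bpow_ge0 d k (bo d) (bo_ge0 d) j')) Hs (isT : xpredT j).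
move/eqP; rewrite mulf_eq0 => /orP[|/eqP //].
by rewrite /Bw mulf_eq0 (negbTE pj) gt_eqF ?expR_gt0.
Qed.

Lemma G_Z t : forall i, Zs i -> G t (fun _ => pbar p d) fZ (Some i) = 1.
Proof.
elim: t => [|t IH] i Zi /=; first by rewrite Zi.
rewrite -(hp1 i (d i)); apply: eq_bigr => -[j|] _ /=.
  have [->|pj] := eqVneq (p i (d i) (Some j)) 0; first by rewrite mul0r.
  rewrite IH ?mulr1 //; exact: ((Z_closed _ Zi).2 j pj).
by rewrite (Z_closed _ Zi).1 mul0r.
Qed.

Lemma reach (htrans : transient p) i : exists k, 0 < Bpow d k (bo d) i.
Proof.
have [//|nH] := pselect (exists k, 0 < Bpow d k (bo d) i).
have Zi : Zs i.
  apply/asboolP => k; apply/eqP; rewrite eq_le Bpow_ge0 ?andbT //; last exact: bo_ge0.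
  by rewrite leNgt; apply/negP => H; apply: nH; exists k.
have occ1 t : 1 <= \sum_j occ p (stationary d) i t j.
  under eq_bigr do rewrite occ_G.
  rewrite -G_lin -[X in X <= _](G_Z t _ Zi); apply: G_mono => [*|[j|]]; rewrite ?pbar_ge0 //=.
    rewrite (bigD1 j) //= eqxx big1 ?addr0; first by case: (Zs j).
    by move=> j' /negbTE H; rewrite (inj_eq Some_inj) eq_sym H.
  by rewrite big1.
pose C j := fine (\sum_(0 <= t <oo) (occ p (stationary d) i t j)%:E)%E.
have CB j N : \sum_(0 <= t < N) occ p (stationary d) i t j <= C j.
  have h0 : (0 <= \sum_(0 <= t <oo) (occ p (stationary d) i t j)%:E)%E.
    by apply: nneseries_ge0 => t _; rewrite lee_fin occ_ge0.
  have hfin : (\sum_(0 <= t <oo) (occ p (stationary d) i t j)%:E)%E \is a fin_num.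
    by rewrite ge0_fin_numE //; apply: htrans.
  rewrite -lee_fin /C fineK // -sumEFin.
  by apply: nneseries_lim_ge => t _ _; rewrite lee_fin occ_ge0.
pose N := (Num.truncn (\sum_j C j)).+1.
have HN := truncnS_gt (\sum_j C j); rewrite -/N in HN.
exfalso; suff : (N%:R : R) <= \sum_j C j by rewrite leNgt HN.
have -> : (N%:R : R) = \sum_(0 <= t < N) 1 by rewrite sumr_const_nat subn0.
apply: le_trans (ler_sum _ (fun t _ => occ1 t)) _.
rewrite exchange_big /=; apply: ler_sum => j _; exact: CB.
Qed.

End Reach.


Lemma Topt_ge0 u : (forall s, 0 <= u s) -> forall s, 0 <= Topt u s.
Proof. by move=> u0 s; rewrite /Topt /Td addr_ge0 ?bo_ge0 ?Bo_ge0. Qed.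

Definition X t := iter t Topt (fun _ => 0).

Lemma X_ge0 t s : 0 <= X t s.
Proof. by elim: t s => [//|t IH] s /=; apply: Topt_ge0. Qed.

Lemma X_incr t s : X t s <= X t.+1 s.
Proof.
elim: t s => [|t IH] s; first exact: X_ge0.
by rewrite [X t.+2]/= [X t.+1]/=; apply: Topt_mono.
Qed.

Lemma X_mono m n s : (m <= n)%N -> X m s <= X n s.
Proof.
move=> /subnK <-; elim: (n - m)%N => [//|k IH].
by rewrite addSn; apply: le_trans IH (X_incr _ _).
Qed.

Lemma X_le_V t s : X t s <= V t s.
Proof. by elim: t s => [s|t IH s] /=; [rewrite ler01|apply: Topt_mono]. Qed.

Lemma V_bnd (hfin : forall s, (-oo < winf_opt p r beta s)%E) s :
  exists n c, forall k, (n <= k)%N -> V k s <= c.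
Proof.
pose u := fun t => ((- V t s)%:E : \bar R).
have hu : winf_opt p r beta s = limn_einf u.
  by rewrite /winf_opt; congr limn_einf; apply: funext => t; rewrite wt_opt_eq.
have := hfin s; rewrite hu limn_einf_lim (cvg_lim _ (@cvg_einfs_sup _ u)) //.
move=> /ereal_sup_gt[_ [n _ <-]] hn.
have hlb k : (n <= k)%N -> (einfs u n <= u k)%E.
  by move=> nk; apply: ereal_inf_lbound; exists k.
have h1 := hlb n (leqnn n); move: hn h1 hlb; case: (einfs u n) => [c| |] //= _ _ hlb.
exists n, (- c) => k /hlb; rewrite /u lee_fin => H.
by rewrite -(opprK (V k s)) lerN2.
Qed.

Lemma X_bnd (hfin : forall s, (-oo < winf_opt p r beta s)%E) s :
  exists c, forall t, X t s <= c.
Proof.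
have [n [c H]] := V_bnd hfin s; exists c => t.
apply: le_trans (X_mono _ _ s (leq_addl n t)) _.
by apply: le_trans (X_le_V _ _) (H _ (leq_addr _ _)).
Qed.


Lemma Bo_ext d u v : (forall s, u s = v s) -> forall s, Bo d u s = Bo d v s.
Proof. by move=> uv s; apply: eq_bigr => s' _; rewrite uv. Qed.

Lemma Bo_add d u v s : Bo d (fun s => u s + v s) s = Bo d u s + Bo d v s.
Proof. by rewrite /Bo -big_split; apply: eq_bigr => s' _; rewrite mulrDr. Qed.

Lemma Bo_scale d c u s : Bo d (fun s => c * u s) s = c * Bo d u s.
Proof. by rewrite /Bo mulr_sumr; apply: eq_bigr => s' _; rewrite mulrCA. Qed.

Lemma Bo_sub d u v s : Bo d (fun s => u s - v s) s = Bo d u s - Bo d v s.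
Proof. by rewrite /Bo -sumrB; apply: eq_bigr => s' _; rewrite mulrBr. Qed.

Lemma Bpow_ext d k u v : (forall s, u s = v s) -> forall s, Bpow d k u s = Bpow d k v s.
Proof. by move=> uv; elim: k => [//|k IH] s /=; apply: Bo_ext. Qed.

Lemma Bpow_mono d k u v : (forall s, u s <= v s) -> forall s, Bpow d k u s <= Bpow d k v s.
Proof. by move=> uv; elim: k => [//|k IH] s /=; apply: Bo_mono. Qed.

Lemma Bpow_add d k u v s :
  Bpow d k (fun s => u s + v s) s = Bpow d k u s + Bpow d k v s.
Proof.
elim: k s => [//|k IH] s /=.
by rewrite -Bo_add; apply: Bo_ext.
Qed.

Lemma Bpow_scale d k c u s : Bpow d k (fun s => c * u s) s = c * Bpow d k u s.
Proof.
elim: k s => [//|k IH] s /=.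
by rewrite -Bo_scale; apply: Bo_ext.
Qed.

Lemma Bpow_D d k j v s : Bpow d (k + j) v s = Bpow d k (Bpow d j v) s.
Proof. by rewrite /Bpow iterD. Qed.

Lemma Bpow_S d k v s : Bpow d k.+1 v s = Bpow d k (Bo d v) s.
Proof. by rewrite /Bpow iterSr. Qed.

Lemma U_stat d t : forall s, U t (stationary d) s = iter t (Td d) (fun _ => 1) s.
Proof.
elim: t => [//|t IH] s; rewrite U_rec /=.
have -> : U t (fun k => stationary d k.+1) = iter t (Td d) (fun _ => 1).
  by apply: funext => s'; exact: IH.
by [].
Qed.

Lemma Bmat_det d s s' : Bmat p r beta (det_rule R d) s s' = Bw s (d s) (Some s').
Proof.
rewrite /Bmat /det_rule (bigD1 (d s)) //= eqxx mulr1 big1 ?addr0 // => a /negbTE ->.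
by rewrite mulr0 mul0r.
Qed.

Lemma bvec_det d s : bvec p r beta (det_rule R d) s = Bw s (d s) None.
Proof.
rewrite /bvec /det_rule (bigD1 (d s)) //= eqxx mulr1 big1 ?addr0 // => a /negbTE ->.
by rewrite mulr0 mul0r.
Qed.

Section Fix.
Hypothesis hfin : forall s, (-oo < winf_opt p r beta s)%E.

Definition ell s := sup (range (fun t => X t s)).

Lemma ell_hs s : has_sup (range (fun t => X t s)).
Proof.
split; first by exists (X 0 s), 0%N.
have [c H] := X_bnd hfin s; exists c => _ [t _ <-]; exact: H.
Qed.

Lemma ell_ub t s : X t s <= ell s.
Proof. by apply: sup_upper_bound; [exact: ell_hs | exists t]. Qed.

Lemma ell_ge0 s : 0 <= ell s.
Proof. exact: le_trans (X_ge0 0 s) (ell_ub 0 s). Qed.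

Lemma ell_unif e : 0 < e -> exists T, forall t s, (T <= t)%N -> ell s - e < X t s.
Proof.
move=> e0.
have H s : exists T, ell s - e < X T s.
  have [_ [T _ <-] h] := sup_adherent e0 (ell_hs s); by exists T.
have [Tf HT] := choice H.
exists (\sum_s Tf s)%N => t s Tt.
apply: lt_le_trans (HT s) (X_mono _ _ s (leq_trans _ Tt)).
by rewrite (bigD1 s) //= leq_addr.
Qed.

Lemma ell_fix s : Topt ell s = ell s.
Proof.
apply/eqP; rewrite eq_le; apply/andP; split; last first.
  apply: ge_sup; first by exists (X 0 s), 0%N.
  move=> _ [[|t] _ <-]; first exact: Topt_ge0 ell_ge0 s.
  by apply: Topt_mono => s'; apply: ell_ub.
apply/ler_addgt0Pr => e e0.
pose cB := \sum_a \sum_(s' : S) Bw s a (Some s') + 1.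
have cB0 : 0 < cB.
  by rewrite /cB ltr_wpDl // sumr_ge0 // => a _; rewrite sumr_ge0 // => ? _; apply: Bw_ge0.
have [T HT] := @ell_unif (e / cB) (divr_gt0 e0 cB0).
pose g := gr (X T).
apply: le_trans (Topt_le g _ s) _.
have H1 : Td g ell s <= Td g (fun s' => X T s' + e / cB) s.
  apply: Td_mono => s'; rewrite -lerBlDr ltW //; exact: HT.
apply: le_trans H1 _.
have -> : Td g (fun s' => X T s' + e / cB) s =
    X T.+1 s + e / cB * \sum_(s' : S) Bw s (g s) (Some s').
  rewrite /= /Topt /Td /Bo -/g -addrA; congr (_ + _).
  rewrite mulr_sumr -big_split /=; apply: eq_bigr => s' _.
  by rewrite mulrDr [_ * (e / cB)]mulrC.
apply: lerD; first exact: ell_ub.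
rewrite -[leRHS](@mulfVK _ cB) ?gt_eqF // [_ * cB]mulrC [leRHS]mulrC ler_wpM2l //.
  by rewrite ltW // divr_gt0.
apply: le_trans (_ : \sum_a \sum_(s' : S) Bw s a (Some s') <= _); last by rewrite lerDl.
rewrite (bigD1 (g s)) //= lerDl sumr_ge0 // => a _.
by rewrite sumr_ge0 // => ? _; apply: Bw_ge0.
Qed.

Definition dst := gr ell.

Lemma hfix s : ell s = bo dst s + Bo dst ell s.
Proof. by rewrite -{1}ell_fix. Qed.

Lemma BoL s : Bo dst ell s <= ell s.
Proof. by rewrite [leRHS]hfix lerDr bo_ge0. Qed.

Lemma BpowL_le k s : Bpow dst k ell s <= ell s.
Proof.
elim: k s => [//|k IH] s /=.
by apply: le_trans (@Bo_mono dst _ _ IH s) (BoL s).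
Qed.

Lemma Bpowb_le k s : Bpow dst k (bo dst) s <= ell s.
Proof.
apply: (le_trans (@Bpow_mono dst k (bo dst) ell _ s) (BpowL_le k s)) => s'.
by rewrite [leRHS]hfix lerDl; apply: Bo_ge0 => ?; apply: ell_ge0.
Qed.

Hypothesis htrans : transient p.

Lemma ell_pos s : 0 < ell s.
Proof. by have [k hk] := reach dst htrans s; apply: lt_le_trans hk (Bpowb_le k s). Qed.

Lemma sum_id N s : ell s = \sum_(k < N) Bpow dst k (bo dst) s + Bpow dst N ell s.
Proof.
elim: N s => [|N IH] s; first by rewrite big_ord0 add0r.
rewrite big_ord_recr /= -addrA.
have -> : Bo dst (Bpow dst N ell) s = Bpow dst N (Bo dst ell) s by rewrite -Bpow_S.
rewrite -Bpow_add.
rewrite {1}(IH s); congr (_ + _); apply: Bpow_ext => s'.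
by rewrite -hfix.
Qed.

Lemma contraction : exists N g, [/\ 0 <= g, g < 1 &
  forall s, Bpow dst N ell s <= g * ell s].
Proof.
have [kf Hk] := choice (reach dst htrans).
pose N := (\sum_s kf s).+1.
pose D s := \sum_(k < N) Bpow dst k (bo dst) s.
have D0 s : 0 < D s.
  have ks : (kf s < N)%N by rewrite ltnS (bigD1 s) //= leq_addr.
  rewrite /D (bigD1 (Ordinal ks)) //= ltr_wpDr //.
  by apply: sumr_ge0 => k _; apply: Bpow_ge0 => s'; apply: bo_ge0.
pose Q := 1 + \sum_s ell s / D s.
have Q1 : 1 <= Q by rewrite lerDl sumr_ge0 // => s _; rewrite divr_ge0 ?ell_ge0 ?ltW.
have Q0 : 0 < Q by apply: lt_le_trans Q1; rewrite ltr01.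
exists N, (1 - Q^-1); split.
- by rewrite subr_ge0 invr_le1 ?unitfE ?gt_eqF.
- by rewrite ltrBlDr ltrDl invr_gt0.
move=> s.
have -> : Bpow dst N ell s = ell s - D s by rewrite /D [in RHS](sum_id N s) addrAC subrr add0r.
rewrite mulrBl mul1r lerD2l lerN2 mulrC ler_pdivrMr // [leRHS]mulrC -ler_pdivrMr //.
rewrite /Q -[leLHS]add0r; apply: lerD; first exact: ler01.
rewrite (bigD1 s) //= lerDl sumr_ge0 // => ? _; rewrite divr_ge0 ?ell_ge0 ?ltW //.


Qed.

Lemma decay y e : 0 < e -> exists T, forall t s, (T <= t)%N -> `|Bpow dst t y s| <= e.
Proof.
move=> e0.
have [N [g [g0 g1 HN]]] := contraction.
pose c := \sum_s `|y s| / ell s.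
have c0 : 0 <= c by rewrite sumr_ge0 // => s _; rewrite divr_ge0 ?ell_ge0.
have yc s : `|y s| <= c * ell s.
  rewrite -ler_pdivrMr ?ell_pos // /c (bigD1 s) //= lerDl sumr_ge0 // => ? _.
  by rewrite divr_ge0 ?ell_ge0.
pose SL := \sum_s ell s.
have SL0 : 0 <= SL by rewrite sumr_ge0 // => s _; rewrite ell_ge0.
pose K := (c + 1) * (SL + 1).
have K0 : 0 < K by rewrite mulr_gt0 // ltr_wpDl.
have e'0 : 0 < e / K by rewrite divr_gt0.
have [m hm] : exists m, g ^+ m <= e / K.
  have gl : `|g| < 1 by rewrite ger0_norm.
  move: (cvg_expr gl) => /cvgrPdist_le /(_ _ e'0) [M _ HM].
  exists M; have := HM M (leqnn M).
  by rewrite /= sub0r normrN ger0_norm ?exprn_ge0.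
have HNm k s : Bpow dst (N * k) ell s <= g ^+ k * ell s.
  elim: k s => [|k IH] s; first by rewrite muln0 expr0 mul1r.
  rewrite mulnS Bpow_D.
  apply: le_trans (@Bpow_mono dst N _ _ IH s) _.
  rewrite Bpow_scale exprSr -mulrA ler_wpM2l ?exprn_ge0 //.
exists (N * m)%N => t s Tt.
have Bt : Bpow dst t ell s <= g ^+ m * ell s.
  rewrite -(subnK Tt) addnC Bpow_D.
  exact: le_trans (@Bpow_mono dst (N * m) _ _ (BpowL_le _) s) (HNm m s).
have Hy : `|Bpow dst t y s| <= c * Bpow dst t ell s.
  rewrite ler_norml; apply/andP; split.
    rewrite -mulNr -Bpow_scale; apply: Bpow_mono => s'.
    by have := yc s'; rewrite ler_norml mulNr => /andP[].
  rewrite -Bpow_scale; apply: Bpow_mono => s'.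
  by have := yc s'; rewrite ler_norml => /andP[].
apply: le_trans Hy _.
apply: le_trans (_ : c * (g ^+ m * ell s) <= _); first by rewrite ler_wpM2l.
apply: le_trans (_ : g ^+ m * K <= _); last first.
  by rewrite -(divfK (lt0r_neq0 K0) e); apply: ler_wpM2r => //; apply: ltW.
rewrite mulrCA ler_wpM2l ?exprn_ge0 //.
apply: ler_pM => //; first exact: ell_ge0.
  by rewrite lerDl.
apply: le_trans (_ : SL <= _); last by rewrite lerDl.
rewrite /SL (bigD1 s) //= lerDl sumr_ge0 // => ? _; exact: ell_ge0.
Qed.

Definition W t := iter t (Td dst) (fun _ => 1).

Lemma W_diff t s : W t s - ell s = Bpow dst t (fun s => 1 - ell s) s.
Proof.
elim: t s => [//|t IH] s.
rewrite [ell s]hfix /= /Td opprD addrACA subrr add0r -Bo_sub.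
by apply: Bo_ext => s'; exact: IH.
Qed.

Lemma V_le_W t s : V t s <= W t s.
Proof.
elim: t s => [//|t IH] s /=.
by apply: le_trans (Topt_le dst _ s) _; apply: Td_mono.
Qed.

Lemma conv e : 0 < e -> exists T, forall t s, (T <= t)%N ->
  `|V t s - ell s| <= e /\ `|W t s - ell s| <= e.
Proof.
move=> e0.
have [T1 H1] := @ell_unif e e0.
have [T2 H2] := @decay (fun s => 1 - ell s) e e0.
exists (T1 + T2)%N => t s Tt.
have hW : `|W t s - ell s| <= e.
  by rewrite W_diff; apply: H2; apply: leq_trans Tt; rewrite leq_addl.
split => //.
rewrite ler_norml; apply/andP; split.
  rewrite lerBrDl addrC ltW //; apply: lt_le_trans (X_le_V t s).
  by rewrite addrC; apply: H1; apply: leq_trans Tt; rewrite leq_addr.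
apply: le_trans (_ : W t s - ell s <= _); first by rewrite lerD2r V_le_W.
by apply: le_trans hW; apply: ler_norm.
Qed.

Lemma uniq_fix x : (forall s, x s = Td dst x s) -> forall s, x s = ell s.
Proof.
move=> hx.
pose y s := x s - ell s.
have hy s : Bo dst y s = y s.
  by rewrite Bo_sub /y [x s]hx [ell s]hfix /Td opprD addrACA subrr add0r.
have hyt t s : y s = Bpow dst t y s.
  elim: t s => [//|t IH] s.
  by rewrite Bpow_S (@Bpow_ext dst t _ _ hy s) -IH.
move=> s; apply/eqP; rewrite -subr_eq0 -normr_le0 -/(y s).
apply/ler_addgt0Pr => e e0; rewrite add0r.
have [T HT] := @decay y e e0.
by rewrite (hyt T); apply: HT.
Qed.

End Fix.

End Main.


Theorem theorem2 (R : realType) (S A : finType) (hA : (0 < #|A|)%N)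
  (p r : S -> A -> option S -> R) (beta : R) (mu : S -> R)
  (hbeta : 0 < beta)
  (hp0 : forall s a s', 0 <= p s a s')
  (hp1 : forall s a, \sum_(s' : option S) p s a s' = 1)
  (hmu : forall s, 0 < mu s) (hmu1 : \sum_(s : S) mu s = 1)
  (htrans : transient p)
  (hfin : forall s, (-oo < winf_opt p r beta s)%E) :
  exists dstar : S -> A,
    let wstar := fun s => fine (winf_opt p r beta s) in
    (forall s, winf_opt p r beta s = winf p r beta (stationary dstar) s) /\
    (forall s, winf_opt p r beta s = (Lop p r beta (det_rule R dstar) wstar s)%:E) /\
    (forall w : S -> R, (forall s, w s = Lop p r beta (det_rule R dstar) w s) ->
       forall s, (w s)%:E = winf_opt p r beta s).
Proof.
have /card_gt0P [a0 _] := hA.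
pose d := dst R S A p r beta a0.
pose L := ell R S A p r beta a0.
have cv := @conv R S A p r beta hbeta hp0 hp1 a0 hfin htrans.
have cvE (u : nat -> R) (l : R) :
    (forall e, 0 < e -> exists T, forall t, (T <= t)%N -> `|u t - l| <= e) ->
    limn_einf (fun t => ((- u t)%:E : \bar R)) = (- l)%:E.
  move=> H; apply: (cvg_limn_einf_sup _).1.
  apply: cvg_EFin; first exact: nearW.
  apply/cvgrPdist_le => e e0; have [T HT] := H e e0.
  by exists T => // t /= Tt; rewrite opprK addrC; apply: HT.
have limV s : winf_opt p r beta s = (- L s)%:E.
  rewrite /winf_opt.
  have -> : (fun t => (wt_opt p r beta t s)%:E) = (fun t => (- V R S A p r beta a0 t s)%:E).
    by apply: funext => t; rewrite (@wt_opt_eq R S A p r beta hbeta hp0 hp1 a0).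
  apply: cvE => e e0; have [T HT] := cv e e0.
  by exists T => t Tt; exact: (HT t s Tt).1.
have limW s : winf p r beta (stationary d) s = (- L s)%:E.
  rewrite /winf.
  have -> : (fun t => (wt p r beta t (stationary d) s)%:E) =
            (fun t => (- W R S A p r beta a0 t s)%:E).
    by apply: funext => t; rewrite (@wt_U R S A p r beta hbeta hp0 hp1) U_stat.
  apply: cvE => e e0; have [T HT] := cv e e0.
  by exists T => t Tt; exact: (HT t s Tt).2.
exists d => wstar; split; [|split].
- by move=> s; rewrite limV limW.
- move=> s; rewrite limV /Lop; congr EFin.
  rewrite /L (@hfix R S A p r beta hbeta hp0 hp1 a0 hfin s) opprD addrC bvec_det; congr (_ - _).
  rewrite /Bo -sumrN; apply: eq_bigr => s' _.
  by rewrite Bmat_det /wstar limV /= mulrN.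
- move=> w hw s; rewrite limV.
  suff hx : forall s', - w s' = Td R S A p r beta d (fun s => - w s) s'.
    by rewrite /L -(@uniq_fix R S A p r beta hbeta hp0 hp1 a0 hfin htrans _ hx s) opprK.
  move=> s'; rewrite [w s']hw /Lop opprB /Td bvec_det /Bo; congr (_ + _).
  rewrite -sumrN; apply: eq_bigr => s'' _.
  by rewrite Bmat_det mulrN.
Qed.
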